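(* Let $a_i,b_i,a'_i,b'_i\ge 0$ ($i=1,2$), $v_1=(a'_1-a_1,b'_1-b_1)$, $v_2=(a'_2-a_2,b'_2-b_2)$, with $-1<\frac{b'_1-b_1}{a'_1-a_1}<0$ and $\frac{b'_2-b_2}{a'_2-a_2}<-1$. For $\epsilon\in(0,1)$ let $A(\epsilon)\in\mathbb{R}^2_{>0}$ be the intersection point of the curves $x^{a'_1-a_1}y^{b'_1-b_1}=\epsilon^2$ and $x^{a'_2-a_2}y^{b'_2-b_2}=\epsilon^{-2}$, and let $J(\epsilon)$ be the Jacobian matrix at $A(\epsilon)$ of the vector field $$F_\epsilon(x,y)=\big(\epsilon x^{a_1}y^{b_1}-\tfrac1\epsilon x^{a'_1}y^{b'_1}\big)v_1+\big(\tfrac1\epsilon x^{a_2}y^{b_2}-\epsilon x^{a'_2}y^{b'_2}\big)v_2$$ (the system followed by the trajectory from $D(\epsilon)=\{x^{a'_1-a_1}y^{b'_1-b_1}=\epsilon^2\}\cap\{x^{a'_2-a_2}y^{b'_2-b_2}=\epsilon^{2}\}$ to $A(\epsilon)$). Then, as $\epsilon$ varies, $J(\epsilon)$ has equal eigenvalues for at most finitely many values of $\epsilon$.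
   Context: $F_\epsilon$ is the mass-action vector field of the network $a_1X+b_1Y\rightleftharpoons a'_1X+b'_1Y$, $a_2X+b_2Y\rightleftharpoons a'_2X+b'_2Y$ with constant rate constants $k_1=\epsilon,k_2=1/\epsilon,k_3=1/\epsilon,k_4=\epsilon$; $A(\epsilon)$ is its (detailed balanced) positive equilibrium. *)

(* Defs.v *)
From HB Require Import structures.
From mathcomp Require Import all_boot all_order all_algebra.
From mathcomp Require Import all_classical all_reals all_analysis.
From mathcomp Require Import complex.
Set Implicit Arguments. Unset Strict Implicit. Unset Printing Implicit Defensive.
Import Order.TTheory GRing.Theory Num.Theory.
Local Open Scope ring_scope.

Definition mono {R : realType} (a b x y : R) : R := (x `^ a) * (y `^ b).

(* The mass-action vector field F_eps of the network, with rates
   k1 = eps, k2 = 1/eps, k3 = 1/eps, k4 = eps, component i = 0 (x) or 1 (y). *)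
Definition Feps {R : realType} (a1 b1 a1' b1' a2 b2 a2' b2' eps : R)
  (i : 'I_2) (x y : R) : R :=
  let v1 := if i == ord0 then a1' - a1 else b1' - b1 in
  let v2 := if i == ord0 then a2' - a2 else b2' - b2 in
  (eps * mono a1 b1 x y - eps^-1 * mono a1' b1' x y) * v1
  + (eps^-1 * mono a2 b2 x y - eps * mono a2' b2' x y) * v2.

Definition jacobian2 {R : realType} (F : 'I_2 -> R -> R -> R) (x0 y0 : R)
  : 'M[R]_2 :=
  \matrix_(i, j) (if j == ord0 then derive1 (fun t => F i t y0) x0
                  else derive1 (fun t => F i x0 t) y0).

(* A real 2x2 matrix has equal eigenvalues: its characteristic polynomial,
   over the algebraic closure C = R[i], is (X - lambda)^2 for some lambda. *)
Definition equal_eigenvalues {R : realType} (M : 'M[R]_2) : Prop :=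
  exists lam : R[i],
    char_poly (map_mx (fun r : R => (r%:C)%C) M) = ('X - lam%:P) ^+ 2.

(* Main.v *)
Require Import Defs.
From HB Require Import structures.
From mathcomp Require Import all_boot all_order all_algebra.
From mathcomp Require Import all_classical all_reals all_analysis.
From mathcomp Require Import complex.
From mathcomp Require Import ring lra.
Import Order.TTheory GRing.Theory Num.Theory.
Local Open Scope ring_scope.
Set Implicit Arguments. Unset Strict Implicit. Unset Printing Implicit Defensive.

Lemma det22 (R : comNzRingType) (A : 'M[R]_2) :
  \det A = A ord0 ord0 * A 1 1 - A ord0 1 * A 1 ord0.
Proof.
rewrite (expand_det_row _ ord0) !big_ord_recr !big_ord0 /cofactor !det_mx11 !mxE /=.
have e0 : widen_ord (leqnSn 1) ord_max = ord0 :> 'I_2 by apply: val_inj.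
have e1 : lift ord0 0 = 1 :> 'I_2 by apply: val_inj.
have e2 : lift ord_max 0 = ord0 :> 'I_2 by apply: val_inj.
have e3 : ord_max = 1 :> 'I_2 by apply: val_inj.
rewrite e0 e1 e2 e3 expr0 expr1; ring.
Qed.
Lemma tr22 (R : comNzRingType) (A : 'M[R]_2) :
  \tr A = A ord0 ord0 + A 1 1.
Proof.
rewrite /mxtrace !big_ord_recr big_ord0 /= add0r.
have e0 : widen_ord (leqnSn 1) ord_max = ord0 :> 'I_2 by apply: val_inj.
have e3 : ord_max = 1 :> 'I_2 by apply: val_inj.
by rewrite e0 e3.
Qed.

Lemma eqeig (R : realType) (M : 'M[R]_2) : equal_eigenvalues M ->
  (\tr M)^+2 = 4 * \det M.
Proof.
case=> lam H.
have h1 := char_poly_trace (map_mx (fun r : R => (r%:C)%C) M) (isT : (0 < 2)%N).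
have h0 := char_poly_det (map_mx (fun r : R => (r%:C)%C) M).
rewrite H in h1 h0.
rewrite (trace_map_mx (real_complex R)) in h1.
rewrite (det_map_mx (real_complex R)) in h0.
rewrite sqrrB !coefE /= in h1 h0.
apply: (@complexI R).
rewrite rmorphXn rmorphM /= (rmorph_nat (real_complex R) 4).
have -> : (\det M)%:C%C = lam * lam by transitivity ((-1)^+2 * (\det M)%:C%C); [ring | rewrite -h0; ring].
have -> : (\tr M)%:C%C = lam *+ 2 by transitivity (- - (\tr M)%:C%C); [ring | rewrite -h1; ring].
ring.
Qed.

Lemma powR_m1 (R : realType) (a x : R) : 0 < x -> x `^ (a - 1) = x `^ a / x.
Proof. move=> hx; rewrite powRB ?powRr1 ?ltW //; apply/implyP=> _; exact: lt0r_neq0. Qed.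

Lemma dmono_x (R : realType) (a b x y : R) : 0 < x ->
  is_derive x 1 (fun t => mono a b t y) (a * mono a b x y / x).
Proof.
move=> hx.
have h := is_deriveZ (y `^ b) (is_derive1_powR a hx).
have -> : (fun t => mono a b t y) = (y `^ b) \*: ((@powR R) ^~ a).
  by apply: funext => t; rewrite /mono /= mulrC.
suff -> : a * mono a b x y / x = y `^ b *: (a * x `^ (a - 1)) by [].
rewrite powR_m1 // /mono /GRing.scale /=; field; exact: lt0r_neq0.
Qed.

Lemma dmono_y (R : realType) (a b x y : R) : 0 < y ->
  is_derive y 1 (fun t => mono a b x t) (b * mono a b x y / y).
Proof.
move=> hy.
have h := is_deriveZ (x `^ a) (is_derive1_powR b hy).
have -> : (fun t => mono a b x t) = (x `^ a) \*: ((@powR R) ^~ b).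
  by apply: funext => t; rewrite /mono /=.
suff -> : b * mono a b x y / y = x `^ a *: (b * y `^ (b - 1)) by [].
rewrite powR_m1 // /mono /GRing.scale /=; field; exact: lt0r_neq0.
Qed.

Lemma derive4 (R : realType) (f1 f2 f3 f4 : R -> R) (d1 d2 d3 d4 c1 c2 c3 c4 x : R) :
  is_derive x 1 f1 d1 -> is_derive x 1 f2 d2 -> is_derive x 1 f3 d3 -> is_derive x 1 f4 d4 ->
  derive1 (fun t => c1 * f1 t + c2 * f2 t + c3 * f3 t + c4 * f4 t) x
  = c1 * d1 + c2 * d2 + c3 * d3 + c4 * d4.
Proof.
move=> h1 h2 h3 h4.
have h := is_deriveD (is_deriveD (is_deriveD (is_deriveZ c1 h1) (is_deriveZ c2 h2))
           (is_deriveZ c3 h3)) (is_deriveZ c4 h4).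
rewrite derive1E.
have -> : (fun t => c1 * f1 t + c2 * f2 t + c3 * f3 t + c4 * f4 t)
   = c1 \*: f1 + c2 \*: f2 + c3 \*: f3 + c4 \*: f4 by [].
by rewrite (@derive_val _ _ _ _ _ _ _ h).
Qed.

Lemma final_alg (R : realType) (eps x y m1 m2 a1 b1 a1' b1' a2 b2 a2' b2' : R)
  (J00 J01 J10 J11 : R) :
  0 < eps -> 0 < x -> 0 < y -> 0 < m1 -> 0 < m2 ->
  a1' - a1 != 0 -> a2' - a2 != 0 ->
  -1 < (b1' - b1) / (a1' - a1) < 0 -> (b2' - b2) / (a2' - a2) < -1 ->
  J00 = eps * (a1' - a1) * (a1 * m1 / x) + - eps^-1 * (a1' - a1) * (a1' * (eps ^+ 2 * m1) / x)
      + eps^-1 * (a2' - a2) * (a2 * m2 / x) + - eps * (a2' - a2) * (a2' * (eps ^- 2 * m2) / x) ->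
  J10 = eps * (b1' - b1) * (a1 * m1 / x) + - eps^-1 * (b1' - b1) * (a1' * (eps ^+ 2 * m1) / x)
      + eps^-1 * (b2' - b2) * (a2 * m2 / x) + - eps * (b2' - b2) * (a2' * (eps ^- 2 * m2) / x) ->
  J01 = eps * (a1' - a1) * (b1 * m1 / y) + - eps^-1 * (a1' - a1) * (b1' * (eps ^+ 2 * m1) / y)
      + eps^-1 * (a2' - a2) * (b2 * m2 / y) + - eps * (a2' - a2) * (b2' * (eps ^- 2 * m2) / y) ->
  J11 = eps * (b1' - b1) * (b1 * m1 / y) + - eps^-1 * (b1' - b1) * (b1' * (eps ^+ 2 * m1) / y)
      + eps^-1 * (b2' - b2) * (b2 * m2 / y) + - eps * (b2' - b2) * (b2' * (eps ^- 2 * m2) / y) ->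
  (J00 + J11) ^+ 2 = 4 * (J00 * J11 - J01 * J10) -> False.
Proof.
move=> he hx hy hm1 hm2 hd1 hd2 /andP[hs1a hs1b] hs2 E00 E10 E01 E11 Heq.
set al1 := a1' - a1 in hd1 hs1a hs1b E00 E01 *.
set al2 := a2' - a2 in hd2 hs2 E00 E01 *.
set be1 := b1' - b1 in hs1a hs1b E10 E11 *.
set be2 := b2' - b2 in hs2 E10 E11 *.
set p1 := eps * m1. set p2 := eps^-1 * m2.
set q1 := al1^+2 / x + be1^+2 / y. set q2 := al2^+2 / x + be2^+2 / y.
set K := al1 * al2 / x + be1 * be2 / y.
have key : (J00 + J11) ^+ 2 - 4 * (J00 * J11 - J01 * J10)
   = (p1 * q1 - p2 * q2) ^+ 2 + 4 * (p1 * p2) * K ^+ 2.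
  rewrite E00 E01 E10 E11 /p1 /p2 /q1 /q2 /K /al1 /al2 /be1 /be2.
  field.
  by rewrite !lt0r_neq0.
have hp : 0 < p1 * p2.
  rewrite /p1 /p2 mulrCA !mulrA mulVf ?lt0r_neq0 // mul1r; exact: mulr_gt0.
set s1 := be1 / al1 in hs1a hs1b. set s2 := be2 / al2 in hs2.
have eb1 : be1 = s1 * al1 by rewrite /s1 divfK.
have eb2 : be2 = s2 * al2 by rewrite /s2 divfK.
have hK : K != 0.
  have -> : K = al1 * al2 * (x^-1 + s1 * s2 * y^-1).
    by rewrite /K eb1 eb2; field; rewrite !lt0r_neq0.
  rewrite mulf_neq0 // ?mulf_neq0 //; apply: lt0r_neq0.
  apply: addr_gt0; first by rewrite invr_gt0.
  apply: mulr_gt0; last by rewrite invr_gt0.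
  nra.
have hK2 : 0 < K ^+ 2 by rewrite lt0r sqr_ge0 sqrf_eq0 hK.
have : 0 < (J00 + J11) ^+ 2 - 4 * (J00 * J11 - J01 * J10).
  rewrite key; apply: (le_lt_trans (sqr_ge0 (p1 * q1 - p2 * q2))).
  by rewrite ltrDl; apply: mulr_gt0 => //; apply: mulr_gt0.
by rewrite Heq subrr ltxx.
Qed.

Theorem proposition4p9 (R : realType) (a1 b1 a1' b1' a2 b2 a2' b2' : R)
  (ha1 : 0 <= a1) (hb1 : 0 <= b1) (ha1' : 0 <= a1') (hb1' : 0 <= b1')
  (ha2 : 0 <= a2) (hb2 : 0 <= b2) (ha2' : 0 <= a2') (hb2' : 0 <= b2')
  (hd1 : a1' - a1 != 0) (hd2 : a2' - a2 != 0)
  (hs1 : -1 < (b1' - b1) / (a1' - a1) < 0)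
  (hs2 : (b2' - b2) / (a2' - a2) < -1)
  (Ax Ay : R -> R)
  (hA : forall eps, 0 < eps < 1 ->
     [/\ 0 < Ax eps, 0 < Ay eps,
         mono (a1' - a1) (b1' - b1) (Ax eps) (Ay eps) = eps ^+ 2
       & mono (a2' - a2) (b2' - b2) (Ax eps) (Ay eps) = eps ^- 2]) :
  exists s : seq R, forall eps, 0 < eps < 1 ->
    equal_eigenvalues
      (jacobian2 (Feps a1 b1 a1' b1' a2 b2 a2' b2' eps) (Ax eps) (Ay eps)) ->
    eps \in s.
Proof.
exists [::] => eps heps Heig; exfalso.
have [hx hy h1 h2] := hA eps heps.
move: heps => /andP[he0 he1].
move: Heig h1 h2 hx hy.
set x := Ax eps; set y := Ay eps => Heig h1 h2 hx hy.
have mono_split : forall a b a' b', mono a' b' x y = mono (a' - a) (b' - b) x y * mono a b x y.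
  move=> a b a' b'; rewrite /mono !powRB; last 2 first.
  - by apply/implyP => _; exact: lt0r_neq0.
  - by apply/implyP => _; exact: lt0r_neq0.
  field; rewrite !lt0r_neq0 // powR_gt0 //.
have E1 : mono a1' b1' x y = eps ^+ 2 * mono a1 b1 x y by rewrite (mono_split a1 b1) h1.
have E2 : mono a2' b2' x y = eps ^- 2 * mono a2 b2 x y by rewrite (mono_split a2 b2) h2.
have hm1 : 0 < mono a1 b1 x y by rewrite /mono mulr_gt0 // powR_gt0.
have hm2 : 0 < mono a2 b2 x y by rewrite /mono mulr_gt0 // powR_gt0.
have Fx : forall i, derive1 (fun t => Feps a1 b1 a1' b1' a2 b2 a2' b2' eps i t y) x =
   let v1 := if i == ord0 then a1' - a1 else b1' - b1 in
   let v2 := if i == ord0 then a2' - a2 else b2' - b2 in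
   eps * v1 * (a1 * mono a1 b1 x y / x) + - eps^-1 * v1 * (a1' * mono a1' b1' x y / x)
   + eps^-1 * v2 * (a2 * mono a2 b2 x y / x) + - eps * v2 * (a2' * mono a2' b2' x y / x).
  move=> i /=.
  rewrite -(derive4 _ _ _ _ (dmono_x a1 b1 y hx) (dmono_x a1' b1' y hx)
     (dmono_x a2 b2 y hx) (dmono_x a2' b2' y hx)).
  congr derive1; apply: funext => t; rewrite /Feps /=; ring.
have Fy : forall i, derive1 (fun t => Feps a1 b1 a1' b1' a2 b2 a2' b2' eps i x t) y =
   let v1 := if i == ord0 then a1' - a1 else b1' - b1 in
   let v2 := if i == ord0 then a2' - a2 else b2' - b2 in
   eps * v1 * (b1 * mono a1 b1 x y / y) + - eps^-1 * v1 * (b1' * mono a1' b1' x y / y)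
   + eps^-1 * v2 * (b2 * mono a2 b2 x y / y) + - eps * v2 * (b2' * mono a2' b2' x y / y).
  move=> i /=.
  rewrite -(derive4 _ _ _ _ (dmono_y a1 b1 x hy) (dmono_y a1' b1' x hy)
     (dmono_y a2 b2 x hy) (dmono_y a2' b2' x hy)).
  congr derive1; apply: funext => t; rewrite /Feps /=; ring.
have := eqeig Heig; rewrite det22 tr22 !mxE /= (Fx ord0) (Fx 1) (Fy ord0) (Fy 1) /= E1 E2.
apply: (final_alg he0 hx hy hm1 hm2 hd1 hd2 hs1 hs2); reflexivity.
Qed.
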